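(* Let $n\ge3$. For each integer $k\ge1$ let \[ S^{n-1}_k=\{x\in\mathbb{R}^n:\|x-c_k\|=r_k\},\qquad r_k=\tfrac1k,\quad c_k=\tfrac1k e_1=\left(\tfrac1k,0,\dots,0\right), \] and let $E_n=\bigcup_{k=1}^\infty S^{n-1}_k$. If $f\in C^\infty(\mathbb{R}^n)$ vanishes on $E_n$, then $f$ is flat at the origin: $D^\alpha f(0)=0$ for all multi-indices $\alpha$.
   Context: $\|\cdot\|$ is the Euclidean norm on $\mathbb{R}^n$ and $e_1$ is the first standard basis vector. *)

(* Defs.v *)
From HB Require Import structures.
From mathcomp Require Import all_boot all_order all_algebra.
From mathcomp Require Import all_classical all_reals all_analysis.
Set Implicit Arguments. Unset Strict Implicit. Unset Printing Implicit Defensive.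
Import Order.TTheory GRing.Theory Num.Theory.
Import numFieldNormedType.Exports.
Local Open Scope ring_scope.

Definition basis_vec (R : realType) (n : nat) (i : 'I_n) : 'rV[R]_n :=
  \row_j (if j == i then 1 else 0).

(* Iterated partial derivative D_{i_1} D_{i_2} ... D_{i_m} f for s = [:: i_1; ...; i_m]. *)
Definition iter_partial (R : realType) (n : nat) (s : seq 'I_n)
    (f : 'rV[R]_n -> R) : 'rV[R]_n -> R :=
  foldr (fun i g => fun x => 'D_(basis_vec R i) g x) f s.

Definition smooth (R : realType) (n : nat) (f : 'rV[R]_n -> R) : Prop :=
  forall (s : seq 'I_n) (x : 'rV[R]_n), differentiable (iter_partial s f) x.

Definition eucl_norm2 (R : realType) (n : nat) (x : 'rV[R]_n) : R :=
  \sum_(i < n) (x ord0 i) ^+ 2.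

Definition center (R : realType) (n : nat) (k : nat) : 'rV[R]_n :=
  \row_i (if val i == 0%N then k%:R^-1 else 0).

Definition sphere_k (R : realType) (n : nat) (k : nat) : set 'rV[R]_n :=
  [set x | Num.sqrt (eucl_norm2 (x - @center R n k)) = k%:R^-1].

Definition E_set (R : realType) (n : nat) : set 'rV[R]_n :=
  [set x | exists k : nat, (1 <= k)%N /\ @sphere_k R n k x].

(* Main.v *)
Require Import Defs.
From HB Require Import structures.
From mathcomp Require Import all_boot all_order all_algebra.
From mathcomp Require Import all_classical all_reals all_analysis.
From mathcomp Require Import ring lra.
Import Order.TTheory GRing.Theory Num.Theory.
Import numFieldNormedType.Exports.
Local Open Scope ring_scope.
Local Open Scope classical_set_scope.

Section S.
Variables (R : realType) (n : nat).
Local Notation V := 'rV[R]_n.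
Implicit Types (g h : V -> R) (u v w x y : V).

Definition Dd v g : V -> R := fun x => 'D_v g x.
Definition itD v m g := iter m (Dd v) g.
Definition Sm g := forall (s : seq 'I_n) x, differentiable (iter_partial s g) x.

Lemma Sm_diff g x : Sm g -> differentiable g x.
Proof. by move=> H; exact: (H [::] x). Qed.

Lemma Sm_Dbasis g i : Sm g -> Sm (Dd (basis_vec R i) g).
Proof. by move=> H s x; have := H (rcons s i) x; rewrite /iter_partial foldr_rcons. Qed.

Lemma DL g h a b x v : derivable g x v -> derivable h x v ->
  'D_v (fun y => a * g y + b * h y) x = a * 'D_v g x + b * 'D_v h x.
Proof.
move=> dg dh.
have -> : (fun y => a * g y + b * h y) = (a \*: g) + (b \*: h) by [].
rewrite deriveD; last 2 first.
- exact: derivableZ.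
- exact: derivableZ.
by rewrite !deriveZ.
Qed.

Lemma diffL g h a b x : differentiable g x -> differentiable h x ->
  differentiable (fun y => a * g y + b * h y) x.
Proof.
move=> dg dh.
have -> : (fun y => a * g y + b * h y) = (a *: g) + (b *: h) by [].
by apply: differentiableD; apply: differentiableZ.
Qed.

Lemma iter_partial_lin g h a b s : Sm g -> Sm h ->
  iter_partial s (fun y => a * g y + b * h y) =
  (fun y => a * iter_partial s g y + b * iter_partial s h y).
Proof.
move=> Hg Hh; elim: s => [//|i s IH] /=.
rewrite [in LHS]/iter_partial /= -/(iter_partial s _) IH.
apply: funext => x; rewrite DL //; apply: diff_derivable.
- exact: Hg.
- exact: Hh.
Qed.

Lemma SmL g h a b : Sm g -> Sm h -> Sm (fun y => a * g y + b * h y).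
Proof.
move=> Hg Hh s x; rewrite iter_partial_lin //; exact: diffL.
Qed.


Lemma Sm0 : Sm (fun _ => 0).
Proof.
have E : forall s, iter_partial s (fun _ : V => 0 : R) = (fun _ => 0).
  elim=> [//|i s IH]; rewrite /iter_partial /= -/(iter_partial s _) IH.
  by apply: funext => x; exact: (derive_cst (0:R)).
by move=> s x; rewrite E; exact: differentiable_cst.
Qed.

Lemma SmS (F : nat -> V -> R) (c : nat -> R) K : (forall j, Sm (F j)) ->
  Sm (fun y => \sum_(j < K) c j * F j y).
Proof.
move=> HF; elim: K => [|K IH].
  have -> : (fun y : V => \sum_(j < 0) c j * F j y) = (fun _ => 0).
    by apply: funext => y; rewrite big_ord0.
  exact: Sm0.
have -> : (fun y => \sum_(j < K.+1) c j * F j y) =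
   (fun y => 1 * (\sum_(j < K) c j * F j y) + c K * F K y).
  by apply: funext => y; rewrite big_ord_recr mul1r.
exact: SmL.
Qed.

Lemma DS (F : nat -> V -> R) (c : nat -> R) K x v :
  (forall j, differentiable (F j) x) ->
  'D_v (fun y => \sum_(j < K) c j * F j y) x = \sum_(j < K) c j * 'D_v (F j) x.
Proof.
move=> HF; elim: K => [|K IH].
  have -> : (fun y : V => \sum_(j < 0) c j * F j y) = (fun _ => 0).
    by apply: funext => y; rewrite big_ord0.
  by rewrite big_ord0; exact: (derive_cst (0:R)).
have -> : (fun y => \sum_(j < K.+1) c j * F j y) =
   (fun y => 1 * (\sum_(j < K) c j * F j y) + c K * F K y).
  by apply: funext => y; rewrite big_ord_recr mul1r.
have dS : forall K, differentiable (fun y => \sum_(j < K) c j * F j y) x.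
  elim=> [|k IHk].
    have -> : (fun y : V => \sum_(j < 0) c j * F j y) = (fun _ => 0).
      by apply: funext => y; rewrite big_ord0.
    exact: differentiable_cst.
  have -> : (fun y => \sum_(j < k.+1) c j * F j y) =
     (fun y => 1 * (\sum_(j < k) c j * F j y) + c k * F k y).
    by apply: funext => y; rewrite big_ord_recr mul1r.
  exact: diffL.
rewrite DL ?mul1r; last 2 first.
- exact: diff_derivable.
- exact: diff_derivable.
by rewrite IH big_ord_recr.
Qed.

Lemma vec_decomp v : v = \sum_(i < n) v ord0 i *: basis_vec R i.
Proof.
apply/rowP => j; rewrite summxE (bigD1 j) //= !mxE eqxx mulr1 big1 ?addr0 //.
by move=> i /negbTE ij; rewrite !mxE eq_sym ij mulr0.
Qed.

Lemma DdirL g a b u w x : differentiable g x ->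
  'D_(a *: u + b *: w) g x = a * 'D_u g x + b * 'D_w g x.
Proof. by move=> dg; rewrite !deriveE // linearD !linearZ. Qed.

Lemma Dbasis g v x : differentiable g x ->
  'D_v g x = \sum_(i < n) v ord0 i * 'D_(basis_vec R i) g x.
Proof.
move=> dg; rewrite deriveE // {1}(vec_decomp v) linear_sum.
by apply: eq_bigr => i _; rewrite linearZ /= deriveE.
Qed.

Lemma Sm_D g v : Sm g -> Sm (Dd v g).
Proof.
move=> Hg.
pose c := fun j => oapp (fun i => v ord0 i) 0 (insub j : option 'I_n).
pose F := fun j => oapp (fun i => Dd (basis_vec R i) g) (fun _ => 0) (insub j : option 'I_n).
have -> : Dd v g = (fun y => \sum_(j < n) c j * F j y).
  apply: funext => y; rewrite /Dd Dbasis; last exact: Sm_diff.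
  by apply: eq_bigr => i _; rewrite /c /F /= valK.
apply: SmS => j; rewrite /F; case: (insub j) => [i|] /=; [exact: Sm_Dbasis | exact: Sm0].
Qed.


Lemma line_derive g y w r : differentiable g (y + r *: w) ->
  is_derive r 1 (fun t : R => g (y + t *: w)) ('D_w g (y + r *: w)).
Proof.
move=> dg.
have Q : (fun h : R => h^-1 *: (((fun t : R => g (y + t *: w)) \o shift r) (h *: 1) - (fun t : R => g (y + t *: w)) r)) =
   (fun h : R => h^-1 *: ((g \o shift (y + r *: w)) (h *: w) - g (y + r *: w))).
  apply: funext => h /=; congr (_ *: (g _ - _)).
  by rewrite scalerDl [h *: 1]mulr1 addrCA addrA.
split.
  by rewrite /derivable Q; exact: diff_derivable.
by rewrite /derive Q.
Qed.


Lemma schwarz_step g u w x t : Sm g -> 0 < t ->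
  exists y, `|y - x| <= t * (`|u| + `|w|) /\
   g (x + t *: u + t *: w) - g (x + t *: u) - g (x + t *: w) + g x
     = t * t * Dd w (Dd u g) y.
Proof.
move=> Hg t0.
have dg : forall z, differentiable g z by move=> z; exact: Sm_diff.
have dDu : forall z, differentiable (Dd u g) z by move=> z; apply: Sm_diff; exact: Sm_D.
pose phi := fun s : R => g (x + t *: w + s *: u) - g (x + s *: u).
pose dphi := fun s : R => Dd u g (x + t *: w + s *: u) - Dd u g (x + s *: u).
have Hphi : forall s : R, is_derive s (1:R) phi (dphi s).
  move=> s.
  have := is_deriveB (line_derive g (x + t *: w) u s (dg _)) (line_derive g x u s (dg _)).
  by [].
have cphi : {within `[0, t], continuous phi}.
  by apply: derivable_within_continuous => s _; case: (Hphi s).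
have [σ σin Eσ] := MVT t0 (fun s _ => Hphi s) cphi.
pose psi := fun r : R => Dd u g (x + σ *: u + r *: w).
have Hpsi : forall r : R, is_derive r (1:R) psi (Dd w (Dd u g) (x + σ *: u + r *: w)).
  by move=> r; exact: (line_derive (Dd u g) (x + σ *: u) w r (dDu _)).
have cpsi : {within `[0, t], continuous psi}.
  by apply: derivable_within_continuous => s _; case: (Hpsi s).
have [τ τin Eτ] := MVT t0 (fun s _ => Hpsi s) cpsi.
exists (x + σ *: u + τ *: w); split.
  have -> : x + σ *: u + τ *: w - x = σ *: u + τ *: w by rewrite addrAC (addrAC x) subrr add0r.
  move: σin τin; rewrite !in_itv /= => /andP[s0 st] /andP[r0 rt].
  apply: (le_trans (ler_normD _ _)); rewrite !normrZ !gtr0_norm // mulrDr.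
  by apply: lerD; apply: ler_wpM2r; rewrite ?normr_ge0 ?ltW.
have E1 : g (x + t *: u + t *: w) - g (x + t *: u) - g (x + t *: w) + g x = phi t - phi 0.
  rewrite /phi /= !scale0r !addr0.
  have -> : x + t *: w + t *: u = x + t *: u + t *: w by rewrite addrAC.
  by ring.
rewrite E1 Eσ subr0 mulrC -mulrA; congr (_ * _).
have -> : dphi σ = psi t - psi 0.
  by rewrite /dphi /psi scale0r addr0 (addrAC x (t *: w)).
by rewrite Eτ subr0 mulrC.
Qed.



Lemma near_ballF (F : V -> R) x e : differentiable F x -> 0 < e ->
  exists2 d, 0 < d & forall y, `|y - x| < d -> `|F x - F y| < e.
Proof.
move=> dF e0.
have := differentiable_continuous dF; move/cvgr_dist_lt => /(_ e e0).
move/nbhs_normP => [d d0 H]; exists d => // y yx; apply: H.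
by rewrite /ball_ /= distrC.
Qed.

Lemma schwarz g u w x : Sm g -> Dd w (Dd u g) x = Dd u (Dd w g) x.
Proof.
move=> Hg.
have dA : differentiable (Dd w (Dd u g)) x by apply: Sm_diff; do 2 apply: Sm_D.
have dB : differentiable (Dd u (Dd w g)) x by apply: Sm_diff; do 2 apply: Sm_D.
apply/eqP; rewrite -subr_eq0 -normr_le0; apply/ler_addgt0Pr => e e0; rewrite add0r.
have e20 : 0 < e / 2 by rewrite divr_gt0.
have [d1 d10 H1] := near_ballF _ _ _ dA e20.
have [d2 d20 H2] := near_ballF _ _ _ dB e20.
pose M := `|u| + `|w| + 1.
have M0 : 0 < M by rewrite /M ltr_wpDl // addr_ge0.
pose t := Num.min d1 d2 / (2 * M).
have t0 : 0 < t by rewrite /t divr_gt0 // ?lt_min ?d10 ?d20 // mulr_gt0.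
have tM : t * (`|u| + `|w|) < Num.min d1 d2.
  apply: (le_lt_trans (y := t * M)).
    by rewrite ler_pM2l // /M lerDl.
  have -> : Num.min d1 d2 / (2 * M) * M = Num.min d1 d2 / 2.
    by rewrite /t; field; rewrite gt_eqF.
  have : 0 < Num.min d1 d2 by rewrite lt_min d10 d20.
  move: (Num.min d1 d2) => m; lra.
have [y [yx Ey]] := schwarz_step g u w x t Hg t0.
have [y' [yx' Ey']] := schwarz_step g w u x t Hg t0.
have Eyy : Dd w (Dd u g) y = Dd u (Dd w g) y'.
  apply: (mulfI (x := t * t)); first by rewrite mulf_neq0 // gt_eqF.
  rewrite -Ey -Ey'.
  have -> : x + t *: w + t *: u = x + t *: u + t *: w by rewrite addrAC.
  move: (g (x + t *: u + t *: w)) (g (x + t *: u)) (g (x + t *: w)) (g x) => a b c d.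
  by ring.
have mind1 : Num.min d1 d2 <= d1 by rewrite ge_min lexx.
have Ly : `|y - x| < d1.
  apply: (le_lt_trans yx). exact: (lt_le_trans tM mind1).
have mind2 : Num.min d1 d2 <= d2 by rewrite ge_min lexx orbT.
have Ly' : `|y' - x| < d2.
  apply: (le_lt_trans yx'); rewrite (addrC `|w|). exact: (lt_le_trans tM mind2).
have h1 := H1 _ Ly.
have h2 := H2 _ Ly'.
rewrite -Eyy in h2.
move: (Dd w (Dd u g) x) (Dd u (Dd w g) x) (Dd w (Dd u g) y) h1 h2 => a b c h1 h2.
have H : `|a - b| <= `|a - c| + `|b - c|.
  have -> : a - b = (a - c) - (b - c) by rewrite opprB addrA subrK.
  exact: ler_normB.
apply: (le_trans H); rewrite [e]splitr; apply: ltW; exact: ltrD.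
Qed.


Lemma SmD g h : Sm g -> Sm h -> Sm (fun y => g y + h y).
Proof.
move=> Hg Hh.
have -> : (fun y => g y + h y) = (fun y => 1 * g y + 1 * h y).
  by apply: funext => y; rewrite !mul1r.
exact: SmL.
Qed.

Lemma DZ g c v x : derivable g x v -> 'D_v (fun y => c * g y) x = c * 'D_v g x.
Proof. by move=> dg; have := deriveZ c dg. Qed.

Lemma Sm_itD g w m : Sm g -> Sm (itD w m g).
Proof. by move=> Hg; elim: m => [//|m IH]; exact: Sm_D. Qed.

Lemma commute g u w m : Sm g -> itD w m (Dd u g) = Dd u (itD w m g).
Proof.
move=> Hg; elim: m => [//|m IH].
change (Dd w (itD w m (Dd u g)) = Dd u (Dd w (itD w m g))).
rewrite IH; apply: funext => x; apply: schwarz; exact: Sm_itD.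
Qed.


Lemma expand g u w k : Sm g -> exists A : nat -> V -> R,
  [/\ forall j, Sm (A j), forall j, (k < j)%N -> A j = (fun _ => 0),
      A 0%N = itD w k g, A 1%N = (fun x => k%:R * Dd u (itD w k.-1 g) x) &
      forall (e : R) x, itD (w + e *: u) k g x = \sum_(j < k.+1) e ^+ j * A j x].
Proof.
move=> Hg; elim: k => [|k [A [SA Az A0 A1 EA]]].
  exists (fun j => if j == 0%N then g else fun _ => 0); split.
  - by case=> [|j] //=; exact: Sm0.
  - by case.
  - by [].
  - by apply: funext => x /=; rewrite mul0r.
  - by move=> e x; rewrite big_ord_recr big_ord0 /= add0r expr0 mul1r.
have SmA : forall j, Sm (A j) by [].
pose B := fun j => fun x => Dd w (A j) x + (if j is j'.+1 then Dd u (A j') x else 0).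
have Dz : forall v x, Dd v (fun _ : V => 0 : R) x = 0.
  by move=> v x; exact: (derive_cst (0:R)).
have Dz' : forall v x, 'D_v (fun _ : V => 0 : R) x = 0.
  by move=> v x; exact: (derive_cst (0:R)).
exists B; split.
- case=> [|j].
    have -> : B 0%N = (fun x => Dd w (A 0%N) x + (fun _ => 0) x) by [].
    by apply: SmD; [exact: Sm_D | exact: Sm0].
  have -> : B j.+1 = (fun x => Dd w (A j.+1) x + Dd u (A j) x) by [].
  by apply: SmD; exact: Sm_D.
- case=> [//|j] kj.
  rewrite /B Az ?Az //; last exact: ltnW.
  by apply: funext => x; rewrite !Dz addr0.
- by apply: funext => x; rewrite /B addr0 A0.
- apply: funext => x; rewrite /B A0 A1.
  rewrite /Dd DZ; last by apply: diff_derivable; apply: Sm_diff; apply: Sm_D; exact: Sm_itD.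
  rewrite -/(Dd w _ x) schwarz; last exact: Sm_itD.
  clear -k; case: k => [|k] /=.
    by rewrite mul0r add0r mul1r.
  by rewrite -[k.+2]addn1 natrD mulrDl mul1r.
- move=> e x.
  change (Dd (w + e *: u) (itD (w + e *: u) k g) x = \sum_(j < k.+2) e ^+ j * B j x).
  have -> : itD (w + e *: u) k g = (fun y => \sum_(j < k.+1) e ^+ j * A j y).
    by apply: funext => y; exact: EA.
  have dA : forall j y, differentiable (A j) y by move=> j y; exact: Sm_diff.
  have -> : w + e *: u = 1 *: w + e *: u by rewrite scale1r.
  rewrite /Dd DdirL; last by apply: Sm_diff; exact: SmS.
  rewrite (DS A (fun j => e ^+ j)) // (DS A (fun j => e ^+ j)) // mul1r.
  rewrite /B.
  under [RHS]eq_bigr do rewrite mulrDr.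
  rewrite big_split /=; congr (_ + _).
    rewrite [RHS]big_ord_recr /= Az // Dz mulr0 addr0.
    by [].
  rewrite [RHS]big_ord_recl /= mulr0 add0r mulr_sumr.
  by apply: eq_bigr => i _; rewrite /bump /= add1n add0n exprS mulrA.
Qed.


Lemma poly_coef0 (a : nat -> R) K (r : R) : 0 < r ->
  (forall e : R, 0 < e -> e < r -> \sum_(j < K) e ^+ j * a j = 0) ->
  forall j, (j < K)%N -> a j = 0.
Proof.
move=> r0 H j jK.
pose p := \poly_(i < K) a i.
have p0 : p = 0.
  apply: (roots_geq_poly_eq0 (rs := [seq r / (i.+2)%:R | i <- iota 0 K])).
  - apply/allP => z /mapP [i _ ->]; rewrite /root horner_poly; apply/eqP.
    under eq_bigr do rewrite mulrC.
    apply: H; first by rewrite divr_gt0.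
    by rewrite ltr_pdivrMr // ltr_pMr // ltr1n.
  - rewrite map_inj_uniq ?iota_uniq // => i i' /(mulfI (lt0r_neq0 r0))/invr_inj/eqP.
    by rewrite eqr_nat => /eqP [].
  - by rewrite size_map size_iota size_poly.
have := congr1 (fun q : {poly R} => q`_j) p0.
by rewrite /= coef_poly jK coef0.
Qed.

Definition Pp (i0 : 'I_n) g := forall w : V, 0 < w ord0 i0 -> forall m, itD w m g 0 = 0.

Lemma P_D i0 g u : Sm g -> Pp i0 g -> Pp i0 (Dd u g).
Proof.
move=> Hg Pg w w0 m.
rewrite commute //.
have [A [SA Az A0 A1 EA]] := expand g u w m.+1 Hg.
pose r := w ord0 i0 / (1 + `|u ord0 i0|).
have u1 : 0 < 1 + `|u ord0 i0| by rewrite ltr_pwDl.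
have r0 : 0 < r by rewrite divr_gt0.
have ru : r * `|u ord0 i0| < w ord0 i0.
  rewrite /r mulrAC ltr_pdivrMr // ltr_pM2l //; lra.
have hz : A 1%N 0 = 0.
  apply: (poly_coef0 (fun j => A j 0) m.+2 r r0) => //.
  move=> e e0 er.
  rewrite -EA; apply: Pg; rewrite !mxE.
  have h1 : e * `|u ord0 i0| <= r * `|u ord0 i0| by rewrite ler_wpM2r // ltW.
  have h2 : - (e * u ord0 i0) <= e * `|u ord0 i0|.
    by rewrite -[e in e * `|_|]gtr0_norm // -normrM -normrN ler_norm.
  lra.
move: hz; rewrite A1 /= => /eqP; rewrite mulf_eq0 pnatr_eq0 /= => /eqP //.
Qed.


Lemma line_derive0 g w r : differentiable g (r *: w) ->
  is_derive r (1:R) (fun t : R => g (t *: w)) ('D_w g (r *: w)).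
Proof.
move=> dg.
have Q : (fun h : R => h^-1 *: (((fun t : R => g (t *: w)) \o shift r) (h *: 1) - (fun t : R => g (t *: w)) r)) =
   (fun h : R => h^-1 *: ((g \o shift (r *: w)) (h *: w) - g (r *: w))).
  apply: funext => h /=; congr (_ *: (g _ - _)).
  by rewrite scalerDl [h *: 1]mulr1.
split.
  by rewrite /derivable Q; exact: diff_derivable.
by rewrite /derive Q.
Qed.

Lemma P_base i0 f : Sm f ->
  (forall w : V, 0 < w ord0 i0 -> forall d : R, 0 < d ->
      exists t : R, [/\ 0 < t, t < d & f (t *: w) = 0]) -> Pp i0 f.
Proof.
move=> Hf Z0 w w0 m.
have dG : forall k y, differentiable (itD w k f) y by move=> k y; apply: Sm_diff; exact: Sm_itD.
have Hd : forall k (t : R), is_derive t (1:R) (fun s : R => itD w k f (s *: w)) (itD w k.+1 f (t *: w)).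
  by move=> k t; exact: line_derive0.
have Z : forall k (d : R), 0 < d -> exists t : R, [/\ 0 < t, t < d & itD w k f (t *: w) = 0].
  elim=> [|k IH] d d0; first exact: Z0.
  have [t1 [t10 t1d z1]] := IH d d0.
  have [t2 [t20 t21 z2]] := IH t1 t10.
  have dF : forall s : R, derivable (fun s : R => itD w k f (s *: w)) s 1.
    by move=> s; case: (Hd k s).
  have cF : {within `[t2, t1], continuous (fun s : R => itD w k f (s *: w))}.
    by apply: derivable_within_continuous => s _; exact: dF.
  have [c cin Hc] := Rolle t21 (fun s _ => dF s) cF (etrans z2 (esym z1)).
  move: cin; rewrite in_itv /= => /andP[c2 c1].
  exists c; split.
  - exact: lt_trans t20 c2.
  - exact: lt_trans c1 t1d.
  - by case: Hc => _ E1; case: (Hd k c) => _ E2; exact: (etrans (esym E2) E1).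
case: (eqVneq (itD w m f 0) 0) => // nz.
have e0 : 0 < `|itD w m f 0| by rewrite normr_gt0.
have [d d0 Hb] := near_ballF (itD w m f) 0 _ (dG m 0) e0.
have w1 : 0 < `|w| + 1 by rewrite ltr_pwDr.
have [t [t0 td zt]] := Z m (d / (`|w| + 1)) (divr_gt0 d0 w1).
have : `|itD w m f 0 - itD w m f (t *: w)| < `|itD w m f 0|.
  apply: Hb; rewrite subr0 normrZ gtr0_norm //.
  move: td; rewrite ltr_pdivlMr // => td.
  apply: le_lt_trans td; rewrite ler_pM2l // lerDl //.
by rewrite zt subr0 ltxx.
Qed.

End S.

Lemma sphere_pt (R : realType) (n : nat) (w : 'rV[R]_n.+1) (d : R) :
  0 < w ord0 ord0 -> 0 < d ->
  exists t : R, [/\ 0 < t, t < d & E_set (t *: w)].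
Proof.
move=> w0 d0.
pose S := \sum_(i < n) (w ord0 (lift ord0 i)) ^+ 2.
have S0 : 0 <= S by apply: sumr_ge0 => i _; exact: sqr_ge0.
pose N := w ord0 ord0 ^+ 2 + S.
have N0 : 0 < N by rewrite /N ltr_pwDl // exprn_gt0.
pose x := 2 * w ord0 ord0 / (N * d).
have x0 : 0 < x by rewrite /x divr_gt0 ?mulr_gt0.
pose k := Num.Def.archi_bound x.
have xk : x < k%:R by exact: archi_boundP (ltW x0).
have k0 : (0 < k)%N.
  by rewrite lt0n; apply/negP => /eqP k0; move: xk; rewrite k0 ltNge (ltW x0).
have kR0 : 0 < k%:R :> R by rewrite ltr0n.
pose t := 2 * w ord0 ord0 / (k%:R * N).
exists t; split.
- by rewrite /t divr_gt0 ?mulr_gt0.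
- rewrite /t ltr_pdivrMr ?mulr_gt0 //.
  move: xk; rewrite /x ltr_pdivrMr ?mulr_gt0 // => xk.
  by rewrite (mulrC d) -mulrA.
exists k; split => //.
rewrite /sphere_k /=.
have -> : eucl_norm2 (t *: w - @Defs.center R n.+1 k) = k%:R^-1 ^+ 2.
  rewrite /eucl_norm2 big_ord_recl !mxE /=.
  have -> : \sum_(i < n) ((t *: w - @Defs.center R n.+1 k) ord0 (lift ord0 i)) ^+ 2 = t ^+ 2 * S.
    rewrite /S mulr_sumr; apply: eq_bigr => i _; rewrite !mxE /= subr0.
    by rewrite exprMn.
  rewrite /t /N; field.
  by rewrite -/N; apply/andP; split; rewrite gt_eqF.
by rewrite sqrtr_sqr ger0_norm // invr_ge0 ltW.
Qed.

Theorem corollary1 (R : realType) (n : nat) (hn : (3 <= n)%N)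
  (f : 'rV[R]_n -> R) (hf : smooth f)
  (hE : forall x, @E_set R n x -> f x = 0) :
  forall s : seq 'I_n, iter_partial s f 0 = 0.
Proof.
case: n hn f hf hE => [//|n] _ f hf hE s.
have key : forall s, @Sm R n.+1 (iter_partial s f) /\ @Pp R n.+1 ord0 (iter_partial s f).
  elim=> [|i s' [S1 P1]].
    split; first exact: hf.
    apply: P_base => //= w w0 d d0.
    have [t [t0 td Et]] := sphere_pt R n w d w0 d0.
    by exists t; split => //; apply: hE.
  split.
    exact: Sm_Dbasis.
  exact: P_D.
have [_ P] := key s.
have := P (basis_vec R ord0) _ 0%N.
by rewrite mxE eqxx ltr01 => /(_ isT).
Qed.
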